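(* Let $2\le s\le 2^{n-2}$ and let $S=\{\mathbf{v}_1,\dots,\mathbf{v}_s\}\subseteq\mathbb{F}_2^n$ be a set of $s$ distinct nonzero vectors with $\dim S\ge2$. Then for any nonnegative integers $b_1,\dots,b_s$ with $\sum_{j=1}^s b_j=2^{\dim S-2}$, the graph $G_S$ has an independent set $A$ of size $2^{\dim S-2}$ with $|A\cap V_j|=b_j$ for every $j\in[s]$.
   Context: For $S=\{\mathbf{v}_1,\dots,\mathbf{v}_s\}\subseteq\mathbb{F}_2^n$ a set of distinct nonzero vectors, $\langle S\rangle$ is its span and $\dim S=\dim\langle S\rangle$. The $s$-partite graph $G_S$ has vertex set $V_1\sqcup\dots\sqcup V_s$ (disjoint union), where $V_j=\{\{\mathbf{x},\mathbf{x}+\mathbf{v}_j\}:\mathbf{x}\in\langle S\rangle\}$ is the set of cosets of $\langle\mathbf{v}_j\rangle$ in $\langle S\rangle$ (so $|V_j|=2^{\dim S-1}$); there are no edges inside any $V_j$, and for $j_1\ne j_2$ a vertex $\{\mathbf{x}_1,\mathbf{x}_1+\mathbf{v}_{j_1}\}\in V_{j_1}$ is adjacent to $\{\mathbf{x}_2,\mathbf{x}_2+\mathbf{v}_{j_2}\}\in V_{j_2}$ iff these two sets intersect. *)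

(* Defs.v *)
From HB Require Import structures.
From mathcomp Require Import all_boot all_order all_algebra.
Set Implicit Arguments. Unset Strict Implicit. Unset Printing Implicit Defensive.
Import GRing.Theory.
Local Open Scope ring_scope.

(* Vectors of F_2^n are row vectors 'rV['F_2]_n.  A family S = {v_1,...,v_s}
   is given as v : 'I_s -> 'rV['F_2]_n (injective, nonzero values). *)

Definition vecmx (n s : nat) (v : 'I_s -> 'rV['F_2]_n) : 'M['F_2]_(s, n) :=
  \matrix_(i < s) v i.

Definition spanS (n s : nat) (v : 'I_s -> 'rV['F_2]_n) : {set 'rV['F_2]_n} :=
  [set x | (x <= vecmx v)%MS].

Definition dimS (n s : nat) (v : 'I_s -> 'rV['F_2]_n) : nat := \rank (vecmx v).

(* vertices of G_S: pairs (j, C) where C = {x, x + v_j} with x in <S>;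
   the tag j realises the disjoint union V_1 ⊔ ... ⊔ V_s *)
Definition GS_vertices (n s : nat) (v : 'I_s -> 'rV['F_2]_n)
  : {set 'I_s * {set 'rV['F_2]_n}} :=
  [set p | (p.2 \in [set [set x; x + v p.1] | x in spanS v])].

Definition GS_part (n s : nat) (v : 'I_s -> 'rV['F_2]_n) (j : 'I_s)
  : {set 'I_s * {set 'rV['F_2]_n}} :=
  [set p in GS_vertices v | p.1 == j].

Definition GS_adj (n s : nat) (p q : 'I_s * {set 'rV['F_2]_n}) : bool :=
  (p.1 != q.1) && (p.2 :&: q.2 != set0).

Definition GS_independent (n s : nat) (v : 'I_s -> 'rV['F_2]_n)
  (A : {set 'I_s * {set 'rV['F_2]_n}}) : Prop :=
  A \subset GS_vertices v /\
  forall p q, p \in A -> q \in A -> ~~ GS_adj p q.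

(* Main.v *)
Require Import Defs.
From mathcomp Require Import all_boot all_order all_algebra.

Import GRing.Theory.

Lemma F2_addrr (a : 'F_2) : (a + a = 0)%R.
Proof. by case: a => -[|[|[|m]]] i /=; apply: val_inj. Qed.

Lemma rv_addrr (n : nat) (x : 'rV['F_2]_n) : (x + x = 0)%R.
Proof. by apply/rowP => i; rewrite !mxE F2_addrr. Qed.

Lemma rv_addKr (n : nat) (x y : 'rV['F_2]_n) : (x + y + y = x)%R.
Proof. by rewrite -addrA rv_addrr addr0. Qed.

Lemma card_span (n s : nat) (v : 'I_s -> 'rV['F_2]_n) :
  (2 ^ dimS v <= #|spanS v|)%N.
Proof.
set M := vecmx v.
have inj : injective (fun u : 'rV['F_2]_(\rank M) => (u *m row_base M)%R).
  by move=> x y; apply: (row_free_inj (row_base_free M)).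
have -> : (2 ^ dimS v = #|[set (u *m row_base M)%R | u in [set: 'rV['F_2]_(\rank M)]]|)%N.
  rewrite card_imset // cardsT card_mx card_Fp //.
  by rewrite mul1n.
apply: subset_leq_card; apply/subsetP => y /imsetP [u _ ->].
rewrite inE; apply: submx_trans (submxMl _ _) _.
by rewrite eq_row_base.
Qed.

Section Build.
Variables (n s : nat) (v : 'I_s -> 'rV['F_2]_n).

Lemma build (js : seq 'I_s) : (4 * size js <= #|spanS v|)%N ->
  exists A : {set 'I_s * {set 'rV['F_2]_n}}, exists C : {set 'rV['F_2]_n},
  [/\ A \subset GS_vertices v, forall p q, p \in A -> q \in A -> ~~ GS_adj p q,
      #|A| = size js, forall j, #|A :&: GS_part v j| = count_mem j js &
      (forall p, p \in A -> p.2 \subset C) /\ (#|C| <= 2 * size js)%N].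
Proof.
elim: js => [|j js IH] /= H.
  exists set0, set0; split => //; try split; first by rewrite sub0set.
  - by move=> p q; rewrite inE.
  - by rewrite cards0.
  - by move=> j; rewrite set0I cards0.
  - by move=> p; rewrite inE.
  - by rewrite cards0.
have H' : (4 * size js <= #|spanS v|)%N by apply: leq_trans H; rewrite leq_mul2l leqnSn orbT.
have [A [C [Asub Aind Acard Apart [AC Ccard]]]] := IH H'.
set bad := C :|: [set (y + v j)%R | y in C].
have hbad : (#|bad| < #|spanS v|)%N.
  apply: leq_trans H.
  apply: (leq_ltn_trans (leq_card_setU _ _)).
  apply: (leq_ltn_trans (leq_add (leqnn _) (leq_imset_card _ _))).
  rewrite addnn -mul2n.
  apply: (leq_ltn_trans (leq_mul (leqnn 2) Ccard)).
  by rewrite mulnA ltn_pmul2l // ltnS.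
have [x xW xbad] : exists2 x, x \in spanS v & x \notin bad.
  apply/exists_inP; apply: contraTT hbad => /exists_inPn hb.
  rewrite -leqNgt; apply: subset_leq_card; apply/subsetP => y yW.
  by have := hb y yW; rewrite negbK.
have xC : x \notin C by apply: contra xbad; rewrite inE => ->.
have xvC : (x + v j)%R \notin C.
  apply: contra xbad => h; rewrite inE; apply/orP; right.
  by apply/imsetP; exists (x + v j)%R => //; rewrite rv_addKr.
set p := (j, [set x; (x + v j)%R]).
have pC : p.2 :&: C = set0.
  apply/setP => y; rewrite !inE; apply/negbTE.
  by apply/negP => /andP [/orP [] /eqP -> ]; [rewrite (negbTE xC)|rewrite (negbTE xvC)].
have pA : p \notin A.
  apply/negP => /AC /subsetP /(_ x); rewrite !inE eqxx /= => /(_ isT).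
  by rewrite (negbTE xC).
have pV : p \in GS_vertices v.
  by rewrite inE; apply/imsetP; exists x.
exists (p |: A), (p.2 :|: C); split.
- by rewrite subUset sub1set pV Asub.
- have nadj : forall q, q \in A -> ~~ GS_adj p q /\ ~~ GS_adj q p.
    move=> q qA; have qC := AC q qA.
    have e1 : p.2 :&: q.2 = set0.
      apply/eqP; rewrite -subset0 -pC; exact: setIS.
    by rewrite /GS_adj e1 setIC e1 eqxx !andbF.
  move=> p1 q1; rewrite !inE => /orP [/eqP -> | h1] /orP [/eqP -> | h2].
  + by rewrite /GS_adj eqxx.
  + by case: (nadj _ h2).
  + by case: (nadj _ h1).
  + exact: Aind.
- by rewrite cardsU1 pA Acard.
- move=> j'.
  rewrite setIUl -Apart.
  have [jj|jj] := eqVneq j j'.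
    have -> : [set p] :&: GS_part v j' = [set p].
      by apply/setIidPl; rewrite sub1set inE pV /= jj.
    by rewrite cardsU1 in_setI (negbTE pA).
  have -> : [set p] :&: GS_part v j' = set0.
    apply/setP => q; rewrite !inE; apply/negbTE/negP => /andP [/eqP -> /andP [_ /=]].
    by rewrite (negbTE jj).
  by rewrite set0U.
split.
- move=> q; rewrite !inE => /orP [/eqP -> | qA]; first exact: subsetUl.
  by apply: subset_trans (AC _ qA) (subsetUr _ _).
- apply: leq_trans (leq_card_setU _ _) _.
  rewrite mulnS; apply: leq_add => //.
  by rewrite cards2; case: (_ != _).
Qed.

End Build.

Theorem mainTheorem14 (n s : nat) (v : 'I_s -> 'rV['F_2]_n)
  (hs2 : (2 <= s)%N) (hsn : (s <= 2 ^ (n - 2))%N)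
  (hinj : injective v) (hnz : forall j, v j != 0%R)
  (hdim : (2 <= dimS v)%N)
  (b : 'I_s -> nat) (hb : (\sum_(j < s) b j)%N = (2 ^ (dimS v - 2))%N) :
  exists A : {set 'I_s * {set 'rV['F_2]_n}},
    GS_independent v A /\ #|A| = (2 ^ (dimS v - 2))%N /\
    forall j : 'I_s, #|A :&: GS_part v j| = b j.
Proof.
set js := flatten [seq nseq (b i) i | i <- enum 'I_s].
have hsize : size js = (\sum_(j < s) b j)%N.
  rewrite size_flatten sumnE /shape -map_comp big_map.
  rewrite big_enum /=; apply: eq_bigr => i _; exact: size_nseq.
have hcount : forall j, count_mem j js = b j.
  move=> j; rewrite count_flatten sumnE -map_comp big_map big_enum /=.
  rewrite (bigD1 j) //= count_nseq /= (eq_refl j) mul1n big1 ?addn0 //.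
  move=> i ij; rewrite count_nseq /=; by case: eqP ij => // ->; rewrite eq_refl.
have H4 : (4 * size js <= #|spanS v|)%N.
  apply: leq_trans _ (card_span _ _ v).
  rewrite hsize hb -{2}(subnKC hdim) expnD.
  by [].
have [A [C [Asub Aind Acard Apart _]]] := @build _ _ v _ H4.
exists A; split; first by split.
split; first by rewrite Acard hsize hb.
by move=> j; rewrite Apart hcount.
Qed.
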